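(* Let $\alpha\ge2$ and $k\ge1$ be integers. Let $x$ be a word of length $n$ chosen uniformly at random from $\{1,\dots,\alpha\}^n$. The expected number of pairs $(i,j)$ with $1\le i\le j\le n$ such that $x[i..j]$ is a $k$-anti-power equals $$\sum_{m=1}^{\lfloor n/k\rfloor}(n+1-km)\prod_{\ell=0}^{k-1}\left(1-\frac{\ell}{\alpha^m}\right),$$ and, for fixed $\alpha$ and $k$, this expectation is $\Theta(n^2)$ as $n\to\infty$.
   Context: $x[i..j]$ denotes the contiguous subword of $x$ from the $i$-th to the $j$-th letter. A $k$-anti-power is a word $w=w_1\cdots w_k$ with $|w_1|=\cdots=|w_k|\ge1$ and $w_1,\dots,w_k$ pairwise distinct. *)

(* Defs.v *)
From mathcomp Require Import all_boot all_order all_algebra.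
Set Implicit Arguments. Unset Strict Implicit. Unset Printing Implicit Defensive.
Import Order.TTheory GRing.Theory Num.Theory.

Definition blocks (T : Type) (k m : nat) (w : seq T) : seq (seq T) :=
  [seq take m (drop (t * m) w) | t <- iota 0 k].

Definition anti_power (T : eqType) (k : nat) (w : seq T) : bool :=
  [exists m : 'I_(size w).+1,
     [&& 0 < (m : nat), size w == k * m & uniq (blocks k m w)]].

(* x[i..j] (0-indexed, inclusive) *)
Definition subword (T : Type) (w : seq T) (i j : nat) : seq T :=
  take (j - i).+1 (drop i w).

Definition num_antipower_factors (T : eqType) (k : nat) (w : seq T) : nat :=
  #|[set p : 'I_(size w) * 'I_(size w) |
      ((p.1 : nat) <= p.2) && anti_power k (subword w p.1 p.2)]|.

Definition expected_antipowers (alpha k n : nat) : rat :=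
  ((\sum_(x : n.-tuple 'I_alpha) (num_antipower_factors k x)%:R)
     / (alpha ^ n)%:R)%R.

(* Main.v *)
Require Import Defs.
From mathcomp Require Import all_boot all_order all_algebra.
From mathcomp Require Import zify ring lra.
Import Order.TTheory GRing.Theory Num.Theory.

Lemma sum_cons {T : finType} n (F : seq T -> nat) :
  \sum_(x : n.+1.-tuple T) F x = \sum_(a : T) \sum_(x : n.-tuple T) F (a :: x).
Proof.
rewrite pair_big /=.
rewrite (reindex (fun p : T * n.-tuple T => [tuple of p.1 :: p.2])) /=.
  by apply: eq_bigr => -[a x].
exists (fun x : n.+1.-tuple T => (thead x, [tuple of behead x])) => [[a x] _ /=|x _].
  by congr pair; apply: val_inj.
by apply: val_inj => /=; case: x => -[|a s] //=.
Qed.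

Section Tup.
Variable T : finType.

Lemma sum_cat a b (F : seq T -> nat) :
  \sum_(w : (a + b).-tuple T) F w =
  \sum_(x : a.-tuple T) \sum_(y : b.-tuple T) F (x ++ y).
Proof.
elim: a F => [|a IH] F.
  rewrite [RHS](eq_bigr (fun _ => \sum_(y : b.-tuple T) F y)); last first.
    by move=> x _; rewrite (tuple0 x).
  by rewrite sum_nat_const card_tuple expn0 mul1n /=.
rewrite (sum_cons a (fun x => \sum_(y : b.-tuple T) F (x ++ y))).
transitivity (\sum_(c : T) \sum_(x : (a + b).-tuple T) F (c :: x)); first exact: sum_cons.
by apply: eq_bigr => c _; rewrite (IH (fun s => F (c :: s))).
Qed.

Lemma sum_const0 (c : nat) : \sum_(w : 0.-tuple T) c = c.
Proof. by rewrite sum_nat_const card_tuple expn0 mul1n. Qed.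

Lemma sum_take n L (F : seq T -> nat) : L <= n ->
  \sum_(x : n.-tuple T) F (take L x) = #|T| ^ (n - L) * \sum_(w : L.-tuple T) F w.
Proof.
elim: L n F => [|L IH] n F hL.
  rewrite (eq_bigr (fun _ => F [::])); last by move=> x _; rewrite take0.
  rewrite [in RHS](eq_bigr (fun _ : 0.-tuple T => F [::])); last first.
    by move=> w _; rewrite (tuple0 w).
  by rewrite sum_const0 sum_nat_const card_tuple subn0.
case: n hL => [//|n] hL.
rewrite (sum_cons n (fun x => F (take L.+1 x))) (sum_cons L F) subSS big_distrr /=.
apply: eq_bigr => a _.
by rewrite (IH n (fun s => F (a :: s))).
Qed.

Lemma sum_sub n i L (F : seq T -> nat) : i + L <= n ->
  \sum_(x : n.-tuple T) F (take L (drop i x)) = #|T| ^ (n - L) * \sum_(w : L.-tuple T) F w.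
Proof.
elim: i n => [|i IH] n hL.
  rewrite (eq_bigr (fun x : n.-tuple T => F (take L x))); last by move=> x _; rewrite drop0.
  exact: sum_take.
case: n hL => [//|n] hL.
rewrite (sum_cons n (fun x => F (take L (drop i.+1 x)))) /=.
rewrite (eq_bigr (fun _ => #|T| ^ (n - L) * \sum_(w : L.-tuple T) F w)); last first.
  by move=> a _; rewrite IH.
rewrite sum_nat_const mulnA -expnS subSn //.
by rewrite addSn ltnS in hL; apply: leq_trans hL; apply: leq_addl.
Qed.

Lemma blocks_cat k m (x y : seq T) : size x = m ->
  blocks k.+1 m (x ++ y) = x :: blocks k m y.
Proof.
move=> hx; rewrite /blocks /= drop0 take_size_cat //; congr cons.
rewrite -(addn0 1) iotaDl -map_comp; apply: eq_map => t /=.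
by rewrite add1n mulSn drop_cat hx ltnNge leq_addr /= addKn.
Qed.

Lemma sum_blocks k m (F : seq (seq T) -> nat) :
  \sum_(w : (k * m).-tuple T) F (blocks k m w) =
  \sum_(t : k.-tuple (m.-tuple T)) F (map (fun u : m.-tuple T => tval u) t).
Proof.
elim: k F => [|k IH] F.
  rewrite [RHS](eq_bigr (fun _ => F [::])); last by move=> t _; rewrite (tuple0 t).
  rewrite [LHS](eq_bigr (fun _ => F [::])); last by move=> w _.
  by rewrite !sum_nat_const !card_tuple mul0n !expn0.
transitivity (\sum_(x : m.-tuple T) \sum_(y : (k * m).-tuple T) F (blocks k.+1 m (x ++ y))).
  exact: (sum_cat m (k * m) (fun w => F (blocks k.+1 m w))).
rewrite (sum_cons k (fun t : seq (m.-tuple T) => F (map (fun u : m.-tuple T => tval u) t))).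
apply: eq_bigr => x _.
rewrite (eq_bigr (fun y : (k * m).-tuple T => F (tval x :: blocks k m y))); last first.
  by move=> y _; rewrite blocks_cat // size_tuple.
by rewrite (IH (fun s => F (tval x :: s))).
Qed.

Lemma count_uniq_blocks k m :
  \sum_(w : (k * m).-tuple T) (uniq (blocks k m w) : nat) = (#|T| ^ m) ^_ k.
Proof.
rewrite (sum_blocks k m (fun s => (uniq s : nat))).
rewrite (eq_bigr (fun t : k.-tuple (m.-tuple T) => if uniq t then 1 else 0)); last first.
  by move=> t _; rewrite map_inj_uniq //; exact: val_inj.
rewrite -big_mkcond sum1_card -card_tuple -(card_uniq_tuples k predT).
by apply: eq_card => t; rewrite inE all_predT.
Qed.
End Tup.

Lemma ap_dvd (T : eqType) k (w : seq T) : anti_power k w -> k %| size w.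
Proof. by case/existsP => m /and3P [_ /eqP e _]; rewrite e; apply: dvdn_mulr. Qed.

Lemma ap_eq (T : eqType) k m (w : seq T) : 0 < k -> 0 < m -> size w = k * m ->
  anti_power k w = uniq (blocks k m w).
Proof.
move=> hk hm hs; apply/existsP/idP.
  case=> m' /and3P [_ /eqP e u].
  have em : (m' : nat) = m by apply/eqP; rewrite -(eqn_pmul2l hk) -e hs.
  by rewrite -em.
move=> u.
have hm' : m < (size w).+1 by rewrite ltnS hs leq_pmull.
by exists (Ordinal hm'); rewrite /= hm hs eqxx u.
Qed.

Definition Acount (T : finType) k L := \sum_(w : L.-tuple T) (anti_power k w : nat).

Lemma Acount_ndvd (T : finType) k L : ~~ (k %| L) -> Acount T k L = 0.
Proof.
move=> h; apply: big1 => w _.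
case E: (anti_power k w) => //.
by move: (ap_dvd _ _ _ E); rewrite size_tuple (negbTE h).
Qed.

Lemma Acount_mul (T : finType) k m : 0 < k -> 0 < m ->
  Acount T k (k * m) = (#|T| ^ m) ^_ k.
Proof.
move=> hk hm; rewrite /Acount -count_uniq_blocks; apply: eq_bigr => w _.
by rewrite (@ap_eq _ k m w hk hm) // size_tuple.
Qed.

Lemma num_sum (T : eqType) k (w : seq T) :
  num_antipower_factors k w =
  \sum_(0 <= i < size w) \sum_(0 <= j < size w)
     (((i <= j) && anti_power k (subword w i j)) : nat).
Proof.
rewrite /num_antipower_factors -sum1_card big_mkcond /=.
transitivity (\sum_(i < size w) \sum_(j < size w) (((i : nat) <= j) && anti_power k (subword w i j) : nat)).
  rewrite pair_bigA; apply: eq_bigr => p _; rewrite inE; by case: (_ && _).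
rewrite big_mkord; apply: eq_bigr => i _.
by rewrite big_mkord.
Qed.
Local Open Scope ring_scope.
Lemma ffact_prod (A k : nat) :
  ((A ^_ k)%:R : rat) = \prod_(0 <= l < k) (A%:R - l%:R).
Proof.
elim: k => [|k IH]; first by rewrite ffactn0 big_geq.
rewrite big_nat_recr //= -IH ffactnSr natrM.
case: (leqP k A) => hkA; first by rewrite natrB.
by rewrite ffact_small // !mul0r.
Qed.

Lemma tri_sum (h : nat -> rat) n :
  \sum_(0 <= i < n) \sum_(0 <= j < n) (if (i <= j)%N then h (j - i).+1 else 0) =
  \sum_(1 <= L < n.+1) (n.+1 - L)%:R * h L.
Proof.
elim: n => [|n IH]; first by rewrite !big_geq.
rewrite (eq_bigr (fun i => \sum_(0 <= j < n) (if (i <= j)%N then h (j - i).+1 else 0)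
     + (if (i <= n)%N then h (n - i).+1 else 0))); last first.
  by move=> i _; rewrite big_nat_recr.
rewrite big_split /= [X in X + _]big_nat_recr //= IH.
rewrite [X in _ + X + _]big1_seq ?addr0; last first.
  move=> j /andP [_]; rewrite mem_index_iota => /andP [_ hj].
  by rewrite leqNgt hj.
rewrite (eq_big_nat _ _ (F1 := fun L => (n.+2 - L)%:R * h L)
   (F2 := fun L => (n.+1 - L)%:R * h L + h L)); last first.
  move=> L /andP [_ hL]; rewrite subSn // -addn1 natrD mulrDl mul1r //.
rewrite big_split /= [X in _ = X + _]big_nat_recr //= subnn mul0r addr0; congr (_ + _).
rewrite big_add1 /= big_nat_rev /=.
apply: eq_big_nat => i /andP [_ hi].
rewrite add0n subSS leq_subr; congr (h _.+1).
by rewrite subKn // -ltnS.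
Qed.

Lemma mult_sum (c f : nat -> rat) k N : (0 < k)%N ->
  \sum_(1 <= L < N.+1) c L * (if (k %| L)%N then f (L %/ k)%N else 0) =
  \sum_(1 <= m < (N %/ k)%N.+1) c (k * m)%N * f m.
Proof.
move=> hk; elim: N => [|N IH]; first by rewrite div0n !big_geq.
rewrite big_nat_recr //= IH divnS //.
case: ifP => hd; last by rewrite mulr0 addr0 add0n.
rewrite add1n [RHS]big_nat_recr //= hd add1n; congr (_ + c _ * _).
have := divnK hd; rewrite divnS // hd add1n => e.
by rewrite mulnC e.
Qed.

Lemma total (T : finType) k n :
  (\sum_(x : n.-tuple T) num_antipower_factors k x =
  \sum_(0 <= i < n) \sum_(0 <= j < n)
     (if i <= j then #|T| ^ (n - (j - i).+1) * Acount T k (j - i).+1 else 0))%N.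
Proof.
rewrite (eq_bigr (fun x : n.-tuple T => \sum_(0 <= i < n) \sum_(0 <= j < n)
   (((i <= j) && anti_power k (subword x i j)) : nat))%N); last first.
  by move=> x _; rewrite num_sum size_tuple.
rewrite exchange_big; apply: eq_big_nat => i /andP [_ hi].
rewrite exchange_big; apply: eq_big_nat => j /andP [_ hj].
case: leqP => hij /=.
  rewrite /Acount -(sum_sub T n i (j - i).+1 (fun s => (anti_power k s : nat))) //.
  by rewrite addnS subnKC.
by apply: big1.
Qed.

Definition Q (alpha k m : nat) : rat :=
  \prod_(0 <= l < k) (1 - l%:R / (alpha ^ m)%N%:R).

Lemma Q_eq alpha k m : (0 < alpha)%N -> (0 < k)%N -> (0 < m)%N ->
  Q alpha k m = (Acount 'I_alpha k (k * m))%:R / (alpha ^ (k * m))%N%:R.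
Proof.
move=> ha hk hm.
rewrite Acount_mul // card_ord ffact_prod mulnC expnM natrX.
have hA : ((alpha ^ m)%N%:R : rat) != 0 by rewrite pnatr_eq0 -lt0n expn_gt0 ha.
rewrite /Q (eq_bigr (fun l => ((alpha ^ m)%N%:R - l%:R) * ((alpha ^ m)%N%:R)^-1)); last first.
  by move=> l _; rewrite mulrBl divff.
by rewrite big_split /= prodr_const_nat subn0 exprVn !natrX.
Qed.

Lemma h_eq alpha k L : (0 < alpha)%N -> (0 < k)%N -> (0 < L)%N ->
  (Acount 'I_alpha k L)%:R / (alpha ^ L)%N%:R =
  if (k %| L)%N then Q alpha k (L %/ k)%N else 0.
Proof.
move=> ha hk hL; case: ifP => hd.
  case/dvdnP: hd hL => m ->; rewrite muln_gt0 => /andP [hm _].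
  by rewrite mulnK // Q_eq // mulnC.
by rewrite Acount_ndvd ?hd // mul0r.
Qed.

Lemma formula alpha k n : (0 < alpha)%N -> (0 < k)%N ->
  expected_antipowers alpha k n =
     \sum_(1 <= m < (n %/ k).+1)
        ((n.+1 - k * m)%N%:R * \prod_(0 <= l < k) (1 - l%:R / (alpha ^ m)%N%:R) : rat).
Proof.
move=> ha hk.
rewrite /expected_antipowers -natr_sum total natr_sum mulr_suml.
rewrite (eq_big_nat _ _ (F2 := fun i => \sum_(0 <= j < n)
   (if (i <= j)%N then (Acount 'I_alpha k (j - i).+1)%:R / (alpha ^ (j - i).+1)%N%:R else 0))); last first.
  move=> i /andP [_ hi]; rewrite natr_sum mulr_suml; apply: eq_big_nat => j /andP [_ hj].
  case: leqP => hij; last by rewrite mul0r.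
  have hLn : ((j - i).+1 <= n)%N by lia.
  rewrite card_ord natrM -{2}(subnK hLn) expnD natrM.
  have h1 : ((alpha ^ (n - (j - i).+1))%N%:R : rat) != 0 by rewrite pnatr_eq0 -lt0n expn_gt0 ha.
  by rewrite -mulf_div divff // mul1r.
rewrite (tri_sum (fun L => (Acount 'I_alpha k L)%:R / (alpha ^ L)%N%:R)).
rewrite (eq_big_nat _ _ (F2 := fun L => (n.+1 - L)%:R * (if (k %| L)%N then Q alpha k (L %/ k)%N else 0))); last first.
  by move=> L /andP [hL _]; rewrite h_eq.
exact: (mult_sum (fun L => (n.+1 - L)%:R) (Q alpha k)).
Qed.

Lemma upper alpha k n : (0 < alpha)%N ->
  expected_antipowers alpha k n <= n%:R ^+ 2.
Proof.
move=> ha.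
have hs : (\sum_(x : n.-tuple 'I_alpha) num_antipower_factors k x <= alpha ^ n * (n * n))%N.
  apply: leq_trans (_ : \sum_(x : n.-tuple 'I_alpha) (n * n) <= _)%N.
    apply: leq_sum => x _; rewrite /num_antipower_factors.
    by apply: leq_trans (max_card _) _; rewrite card_prod card_ord size_tuple.
  by rewrite sum_nat_const card_tuple card_ord.
rewrite /expected_antipowers -natr_sum ler_pdivrMr; last by rewrite ltr0n expn_gt0 ha.
by rewrite -natrX -natrM ler_nat mulnC.
Qed.

Lemma Q_ge0 alpha k m : (0 < alpha)%N -> (0 < k)%N -> (0 < m)%N -> 0 <= Q alpha k m.
Proof. by move=> ha hk hm; rewrite Q_eq // divr_ge0 // ler0n. Qed.

Lemma Q_big alpha k m : (2 <= alpha)%N -> (2 * k <= m)%N ->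
  ((2 ^ k)%N%:R)^-1 <= Q alpha k m.
Proof.
move=> ha hm.
have e : ((2 ^ k)%N%:R : rat)^-1 = \prod_(0 <= l < k) 2^-1.
  by rewrite prodr_const_nat subn0 natrX exprVn.
rewrite e /Q big_nat_cond [X in _ <= X]big_nat_cond.
apply: ler_prod => l /andP [/andP [_ hl] _].
have hA : (m < alpha ^ m)%N by apply: ltn_expl.
have h2 : (2 * l <= alpha ^ m)%N by lia.
have h2' : 2 * l%:R <= (alpha ^ m)%N%:R :> rat by rewrite -natrM ler_nat.
have hA0 : 0 < (alpha ^ m)%N%:R :> rat by rewrite ltr0n; lia.
have ht : l%:R / (alpha ^ m)%N%:R <= 2^-1 :> rat.
  rewrite ler_pdivrMr //; lra.
apply/andP; split; first by rewrite invr_ge0.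
lra.
Qed.

Lemma lower alpha k n : (2 <= alpha)%N -> (0 < k)%N -> (8 * k * k <= n)%N ->
  ((8 * k * 2 ^ k)%N%:R)^-1 * n%:R ^+ 2 <= expected_antipowers alpha k n.
Proof.
move=> ha hk hn.
rewrite formula //; last by lia.
set M2 := (n %/ (2 * k))%N.
have hk2 : (0 < 2 * k)%N by lia.
have hM2 : (2 * k <= M2)%N by rewrite /M2 leq_divRL //; lia.
have hM2b : (M2 * (2 * k) <= n)%N by exact: leq_divM.
have hM2c : (n < M2.+1 * (2 * k))%N by exact: ltn_ceil.
have hM3 : (M2 <= n %/ k)%N by rewrite leq_divRL //; lia.
set F := fun m => (n.+1 - k * m)%N%:R * \prod_(0 <= l < k) (1 - l%:R / (alpha ^ m)%N%:R) : rat.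
have F0 : forall m, (0 < m)%N -> 0 <= F m.
  move=> m hm; apply: mulr_ge0; first by rewrite ler0n.
  by have := Q_ge0 alpha k m; rewrite /Q; apply; lia.
rewrite (@big_cat_nat _ _ _ (2 * k) 1 (n %/ k).+1) //=; last by lia.
rewrite (@big_cat_nat _ _ _ M2.+1 (2 * k) (n %/ k).+1) //=; last by lia.
set A := \sum_(1 <= i < 2 * k) _.
set C := \sum_(M2.+1 <= i < (n %/ k).+1) _.
have A0 : 0 <= A.
  by rewrite /A big_nat_cond; apply: sumr_ge0 => i /andP [/andP [hi _] _]; apply: F0.
have C0 : 0 <= C.
  by rewrite /C big_nat_cond; apply: sumr_ge0 => i /andP [/andP [hi _] _]; apply: F0; lia.
set S := (\sum_(2 * k <= m < M2.+1) (n.+1 - k * m))%N.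
have hS : (n * n <= 8 * k * S)%N.
  have h2S : ((M2.+1 - 2 * k) * n <= 2 * S)%N.
    rewrite /S big_distrr /= -sum_nat_const_nat big_nat_cond [X in (_ <= X)%N]big_nat_cond.
    apply: leq_sum => m /andP [/andP [h1 h2] _].
    have : (k * m * 2 <= M2 * (2 * k))%N.
      by nia.
    lia.
  have : (n <= 4 * k * (M2.+1 - 2 * k))%N by nia.
  nia.
have hB : (S%:R * ((2 ^ k)%N%:R)^-1 <= \sum_(2 * k <= i < M2.+1) F i).
  rewrite natr_sum mulr_suml big_nat_cond [X in _ <= X]big_nat_cond.
  apply: ler_sum => m /andP [/andP [h1 h2] _].
  apply: ler_wpM2l; first by rewrite ler0n.
  by apply: Q_big.
have hP : 0 < (2 ^ k)%N%:R :> rat by rewrite ltr0n expn_gt0.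
have hc : ((8 * k * 2 ^ k)%N%:R)^-1 * n%:R ^+ 2 <= S%:R * ((2 ^ k)%N%:R)^-1 :> rat.
  rewrite natrM invfM mulrC mulrA.
  rewrite ler_wpM2r ?invr_ge0 ?ler0n // ler_pdivrMr; last by rewrite ltr0n; lia.
  by rewrite expr2 -!natrM ler_nat mulnC.
lra.
Qed.

Theorem corollary6p3 (alpha k : nat) (halpha : (2 <= alpha)%N) (hk : (1 <= k)%N) :
  (forall n : nat,
     expected_antipowers alpha k n =
     \sum_(1 <= m < (n %/ k).+1)
        ((n.+1 - k * m)%N%:R *
         \prod_(0 <= l < k) (1 - l%:R / (alpha ^ m)%N%:R) : rat))
  /\
  (exists (c1 c2 : rat) (N : nat), 0 < c1 /\ 0 < c2 /\
     forall n : nat, (N <= n)%N ->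
       c1 * (n%:R ^+ 2) <= expected_antipowers alpha k n /\
       expected_antipowers alpha k n <= c2 * (n%:R ^+ 2)).
Proof.
split; first by move=> n; apply: formula; lia.
exists ((8 * k * 2 ^ k)%N%:R)^-1, 1, (8 * k * k)%N.
split; first by rewrite invr_gt0 ltr0n !muln_gt0 expn_gt0; lia.
split; first by [].
move=> n hn; split; first exact: lower.
by rewrite mul1r upper //; lia.
Qed.
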